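(* Fix a strategy $\mathcal{G}$ for the partial feedback game and let $H$ be the random complete history when $\pi\sim\mathcal{S}_{m,n}$ is uniform. Let $0<\varepsilon\le \frac14$. For any card type $i$, if $n$ is sufficiently large in terms of $\varepsilon$ and $m$, then \[\Pr\Big[Y_i(H) > (1+4\varepsilon)\frac{b_i(H)}{n} + \varepsilon^2 m\Big] \le c' \varepsilon^{-2} e^{-c \varepsilon^4 m}\] for some constants $c,c'>0$ depending only on $\varepsilon$.
   Context: $\mathcal{S}_{m,n}$ is the set of words over $[n]$ in which each symbol appears exactly $m$ times (a deck of $mn$ cards). In the partial feedback game the guesser makes guesses $g_1,\dots,g_{mn}\in[n]$ sequentially; after guess $g_t$ they learn only $y_t\in\{0,1\}$, where $y_t=1$ iff $\pi_t=g_t$. A strategy chooses $g_t$ as a function of $(g_1,\dots,g_{t-1},y_1,\dots,y_{t-1})$. A history up to time $s$ is $h_s=((g_r)_{r\le s},(y_r)_{r\le s})$, $H_s$ is the random history up to time $s$, and $H=H_{mn}$. For a history $h_s$, $a_i(h_s)=|\{r\le s:g_r=i\}|$. The $t$-th guess, with $g_t=i$, is called critical if $\varepsilon mn\le a_i(H_{t-1})<(1-\varepsilon)mn$. $b_i(H)$ is the number of critical guesses with $g_t=i$, and $Y_i(H)$ is the number of those that are correct. *)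

(* Defs.v *)
From HB Require Import structures.
From mathcomp Require Import all_boot all_order all_algebra.
From mathcomp Require Import all_classical all_reals all_analysis.
Set Implicit Arguments. Unset Strict Implicit. Unset Printing Implicit Defensive.
Import Order.TTheory GRing.Theory Num.Theory.
Local Open Scope ring_scope.

(* A (deterministic) strategy: the next guess as a function of the history so
   far, a history being the sequence of pairs (g_r, y_r) for r < t. *)
Definition strategy (T : Type) := seq (T * bool) -> T.

Fixpoint play_aux (T : eqType) (strat : strategy T) (h : seq (T * bool))
    (w : seq T) : seq (T * bool) :=
  match w with
  | [::] => h
  | c :: w' => let g := strat h in play_aux strat (rcons h (g, g == c)) w'
  end.

Definition history (T : eqType) (strat : strategy T) (w : seq T) :=
  play_aux strat [::] w.

Definition a_count (T : eqType) (i : T) (h : seq (T * bool)) : nat :=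
  count (fun p => p.1 == i) h.

(* The t-th guess (0-indexed, t-th entry of H) with guess i is critical iff
   eps*m*n <= a_i(H_{t-1}) < (1-eps)*m*n, where H_{t-1} = take t H. *)
Definition is_critical (R : realType) (eps : R) (m n : nat) (T : eqType)
    (i : T) (H : seq (T * bool)) (t : nat) : bool :=
  let a : R := (a_count i (take t H))%:R in
  (eps * (m * n)%:R <= a) && (a < (1 - eps) * (m * n)%:R).

Definition b_count (R : realType) (eps : R) (m n : nat) (T : eqType)
    (i : T) (H : seq (T * bool)) : nat :=
  count (fun tp : nat * (T * bool) =>
           (tp.2.1 == i) && is_critical eps m n i H tp.1)
        (zip (iota 0 (size H)) H).

Definition Y_count (R : realType) (eps : R) (m n : nat) (T : eqType)
    (i : T) (H : seq (T * bool)) : nat :=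
  count (fun tp : nat * (T * bool) =>
           [&& tp.2.1 == i, tp.2.2 & is_critical eps m n i H tp.1])
        (zip (iota 0 (size H)) H).

(* S_{m,n}: words of length mn over [n] = 'I_n with each symbol exactly m times. *)
Definition deck (m n : nat) : {set (m * n).-tuple 'I_n} :=
  [set w : (m * n).-tuple 'I_n | [forall j : 'I_n, count_mem j w == m]].

Definition prob_deck (R : realType) (m n : nat)
    (E : pred ((m * n).-tuple 'I_n)) : R :=
  #|[set w in deck m n | E w]|%:R / #|deck m n|%:R.

(* Main.v *)
Require Import Defs.
From HB Require Import structures.
From mathcomp Require Import all_boot all_order all_algebra.
From mathcomp Require Import all_classical all_reals all_analysis.
From mathcomp Require Import ring lra zify.
Set Implicit Arguments. Unset Strict Implicit. Unset Printing Implicit Defensive.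
Import Order.TTheory GRing.Theory Num.Theory.
Local Open Scope ring_scope.
Ltac sh := match goal with |- ?G => idtac "GOAL:" G end.
Definition upd n (cnt : 'I_n -> nat) (c : 'I_n) : 'I_n -> nat :=
  fun j => (cnt j - (c == j))%N.
Definition Dset n L (cnt : 'I_n -> nat) : {set L.-tuple 'I_n} :=
  [set w : L.-tuple 'I_n | [forall j, count_mem j w == cnt j]].

Lemma big_tuple_cons (V : Type) (idx : V) (op : Monoid.com_law idx)
   (T : finType) L (G : L.+1.-tuple T -> V) :
  \big[op/idx]_(w : L.+1.-tuple T) G w =
  \big[op/idx]_(c : T) \big[op/idx]_(w' : L.-tuple T) G [tuple of c :: w'].
Proof.
rewrite pair_big /=.
rewrite (reindex (fun p : T * L.-tuple T => [tuple of p.1 :: p.2])) /=.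
  by apply: eq_bigr => -[c w'].
exists (fun w : L.+1.-tuple T => (thead w, [tuple of behead w])) => [[c w'] _|w _] /=.
  by rewrite theadE; congr pair; apply: val_inj.
by rewrite -tuple_eta.
Qed.

Lemma in_Dset_cons n L (cnt : 'I_n -> nat) (c : 'I_n) (w : L.-tuple 'I_n) :
  ([tuple of c :: w] \in Dset L.+1 cnt) = (0 < cnt c)%N && (w \in Dset L (upd cnt c)).
Proof.
rewrite !inE /=.
apply/forallP/andP => [H|[Hc /forallP H] j].
- split.
    by have := eqP (H c); rewrite /= eqxx => <-.
  apply/forallP => j; have := eqP (H j); rewrite /upd /= => <-.
  by rewrite addKn.
- have := eqP (H j); rewrite /upd /= => ->.
  rewrite subnKC //; case: eqP => // <-; exact: Hc.
Qed.

Lemma big_Dset_cons (V : Type) (idx : V) (op : Monoid.com_law idx) n L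
   (cnt : 'I_n -> nat) (G : L.+1.-tuple 'I_n -> V) :
  \big[op/idx]_(w in Dset L.+1 cnt) G w =
  \big[op/idx]_(c | (0 < cnt c)%N)
     \big[op/idx]_(w in Dset L (upd cnt c)) G [tuple of c :: w].
Proof.
rewrite big_mkcond big_tuple_cons [RHS]big_mkcond /=; apply: eq_bigr => c _.
case: ifP => Hc.
- rewrite [RHS]big_mkcond; apply: eq_bigr => w _; by rewrite in_Dset_cons Hc.
- rewrite big1 // => w _; by rewrite in_Dset_cons Hc.
Qed.

Lemma card_Dset_rec n L (cnt : 'I_n -> nat) :
  #|Dset L.+1 cnt| = (\sum_(c | (0 < cnt c)%N) #|Dset L (upd cnt c)|)%N.
Proof.
rewrite -sum1_card (big_Dset_cons _ _ (fun _ => 1%N)).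
by apply: eq_bigr => c _; rewrite sum1_card.
Qed.

Definition pfact n (cnt : 'I_n -> nat) := (\prod_j (cnt j)`!)%N.

Lemma pfact_gt0 n (cnt : 'I_n -> nat) : (0 < pfact cnt)%N.
Proof. by rewrite /pfact prodn_gt0 // => j; exact: fact_gt0. Qed.

Lemma pfact_upd n (cnt : 'I_n -> nat) c : (0 < cnt c)%N ->
  pfact cnt = (cnt c * pfact (upd cnt c))%N.
Proof.
move=> Hc; rewrite /pfact (bigD1 c) //=.
rewrite [in RHS](bigD1 c) //= mulnA; congr (_ * _)%N.
  rewrite /upd eqxx; case: (cnt c) Hc => // k _; by rewrite factS subn1.
apply: eq_bigr => j Hj; rewrite /upd; case: eqP => [E|]; last by rewrite subn0.
by move: Hj; rewrite E eqxx.
Qed.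

Lemma sum_upd n (cnt : 'I_n -> nat) c : (0 < cnt c)%N ->
  (\sum_j upd cnt c j = (\sum_j cnt j) - 1)%N.
Proof.
move=> Hc; rewrite (bigD1 c) //= [in RHS](bigD1 c) //= /upd eqxx.
rewrite (eq_bigr (fun j => cnt j)); first by lia.
move=> j Hj; case: eqP => [E|]; last by rewrite subn0.
by move: Hj; rewrite E eqxx.
Qed.

Lemma card_Dset n L (cnt : 'I_n -> nat) :
  (\sum_j cnt j)%N = L -> (#|Dset L cnt| * pfact cnt = L`!)%N.
Proof.
elim: L cnt => [|L IH] cnt Hs.
- have H0 : forall j, cnt j = 0%N.
    by move=> j; move: Hs; rewrite (bigD1 j) //= => /eqP; rewrite addn_eq0 => /andP[/eqP].
  have -> : Dset 0 cnt = [set: 0.-tuple 'I_n].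
    apply/setP => w; rewrite !inE; apply/forallP => j.
    by case: w => -[|//] ?; rewrite H0.
  rewrite cardsT card_tuple expn0 mul1n /pfact.
  by rewrite big1 // => j _; rewrite H0.
- rewrite card_Dset_rec big_distrl /=.
  rewrite (eq_bigr (fun c => cnt c * L`!)%N); last first.
    move=> c Hc; rewrite (pfact_upd Hc) mulnCA IH; first by rewrite mulnC.
    by rewrite sum_upd // Hs subn1.
  rewrite -big_distrl /= factS; congr (_ * _)%N.
  rewrite -Hs [in RHS](bigID (fun c => 0 < cnt c)%N) /=.
  rewrite [X in _ = (_ + X)%N]big1 ?addn0 //.
  by move=> j; rewrite lt0n negbK => /eqP.
Qed.

Lemma card_Dset_ratio n L (cnt : 'I_n -> nat) c :
  (\sum_j cnt j)%N = L.+1 -> (0 < cnt c)%N ->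
  (#|Dset L (upd cnt c)| * L.+1 = cnt c * #|Dset L.+1 cnt|)%N.
Proof.
move=> Hs Hc.
have Hs' : (\sum_j upd cnt c j)%N = L by rewrite sum_upd // Hs subn1.
apply/eqP; rewrite -(eqn_pmul2r (pfact_gt0 cnt)); apply/eqP.
have E1 := card_Dset Hs; have E2 := card_Dset Hs'.
rewrite (pfact_upd Hc) in E1 *; rewrite factS in E1.
move: E1 E2; generalize #|Dset L (upd cnt c)| #|Dset L.+1 cnt| (pfact (upd cnt c)) (cnt c) (L`!).
move=> a b p k f E1 E2.
have -> : (a * L.+1 * (k * p) = L.+1 * k * (a * p))%N by ring.
have -> : (k * b * (k * p) = k * (b * (k * p)))%N by ring.
by rewrite E1 E2; ring.
Qed.
Fixpoint prodW (R : realType) n (i : 'I_n) (F : seq 'I_n -> bool -> R)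
   (pre w : seq 'I_n) : R :=
  if w is c :: w' then F pre (c == i) * prodW i F (rcons pre c) w' else 1.

Fixpoint sumW (R : realType) n (i : 'I_n) (F : seq 'I_n -> bool -> R)
   (pre w : seq 'I_n) : R :=
  if w is c :: w' then F pre (c == i) + sumW i F (rcons pre c) w' else 0.

Lemma dp (R : realType) n (i : 'I_n) (F : seq 'I_n -> bool -> R)
   (V : nat -> nat -> R) (r0 L0 : nat) :
  (forall pre b, 0 <= F pre b) -> 1 <= V 0%N 0%N ->
  (forall pre r Rr, (0 < Rr)%N -> (r <= Rr)%N ->
     (r + count_mem i pre = r0)%N -> (Rr + size pre = L0)%N ->
     r%:R / Rr%:R * F pre true * V r.-1 Rr.-1
       + (1 - r%:R / Rr%:R) * F pre false * V r Rr.-1 <= V r Rr) ->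
  forall L (cnt : 'I_n -> nat) pre, (\sum_j cnt j)%N = L ->
  (cnt i + count_mem i pre = r0)%N -> (L + size pre = L0)%N ->
  \sum_(w in Dset L cnt) prodW i F pre (val w) <= V (cnt i) L * #|Dset L cnt|%:R.
Proof.
move=> F0 V00 HV; elim=> [|L IH] cnt pre Hs Hr HL.
- have H0 : forall j, cnt j = 0%N.
    by move=> j; move: Hs; rewrite (bigD1 j) //= => /eqP; rewrite addn_eq0 => /andP[/eqP].
  rewrite H0 (eq_bigr (fun _ => 1)); last by move=> w _; case: w => -[|//] ?.
  by rewrite sumr_const -[X in X <= _]mul1r ler_wpM2r // ler0n.
- rewrite big_Dset_cons /=.
  have Hterm : forall c, (0 < cnt c)%N ->
    \sum_(w in Dset L (upd cnt c)) prodW i F pre (c :: val w) <=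
    F pre (c == i) * (V (upd cnt c i) L * #|Dset L (upd cnt c)|%:R).
    move=> c Hc /=; rewrite -mulr_sumr ler_wpM2l //.
    apply: IH.
    - by rewrite sum_upd // Hs subn1.
    - rewrite /upd -cats1 count_cat /= addn0 -Hr.
      case: eqP => [E|_]; last by rewrite subn0 addn0.
      by rewrite E in Hc; change (nat_of_bool true) with 1%N; rewrite subn1 addn1 addnS -addSn prednK.
    - by rewrite size_rcons addnS -HL.
  apply: (le_trans (ler_sum _ Hterm)).
  set D := #|Dset L.+1 cnt|%:R.
  have HK : (L.+1%:R : R) != 0 by rewrite pnatr_eq0.
  pose T c := F pre (c == i) * (V (upd cnt c i) L * ((cnt c)%:R * D / L.+1%:R)).
  rewrite (eq_bigr T); last first.
    move=> c Hc; rewrite /T; congr (_ * (_ * _)).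
    apply: (mulIf HK); rewrite divfK // -natrM card_Dset_ratio //.
    by rewrite natrM.
  have -> : \sum_(c | (0 < cnt c)%N) T c = \sum_c T c.
    rewrite [RHS](bigID (fun c => (0 < cnt c)%N)) /= [X in _ = _ + X]big1 ?addr0 //.
    by move=> c; rewrite lt0n negbK => /eqP Hc; rewrite /T Hc !mul0r mulr0 mulr0.
  rewrite (bigD1 i) //=.
  have -> : \sum_(c | c != i) T c =
     F pre false * V (cnt i) L * D / L.+1%:R * (\sum_(c | c != i) cnt c)%:R.
    rewrite natr_sum mulr_sumr; apply: eq_bigr => c Hc.
    rewrite /T /upd (negbTE Hc) subn0; field.
    by [].
  have Hsi : (\sum_(c | c != i) cnt c = L.+1 - cnt i)%N.
    by rewrite -Hs [in RHS](bigD1 i) //= addKn.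
  have Hri : (cnt i <= L.+1)%N by rewrite -Hs (bigD1 i) //= leq_addr.
  rewrite Hsi natrB // /T /upd eqxx subn1.
  have := HV pre (cnt i) L.+1 (ltn0Sn _) Hri Hr HL.
  move=> /(ler_wpM2r (ler0n _ #|Dset L.+1 cnt|)); rewrite -/D.
  move=> H; apply: (le_trans _ H); rewrite le_eqVlt; apply/orP; left; apply/eqP => /=; field.
  by [].
Qed.
Lemma play_aux_rcons (T : eqType) (strat : strategy T) h w c :
  play_aux strat h (rcons w c) =
  rcons (play_aux strat h w) (strat (play_aux strat h w), strat (play_aux strat h w) == c).
Proof. by elim: w h => [|c' w IH] h //=. Qed.

Lemma size_play_aux (T : eqType) (strat : strategy T) h w :
  size (play_aux strat h w) = (size h + size w)%N.
Proof. by elim: w h => [|c' w IH] h /=; rewrite ?addn0 // IH size_rcons addSnnS. Qed.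

Lemma size_history (T : eqType) (strat : strategy T) w :
  size (history strat w) = size w.
Proof. by rewrite /history size_play_aux. Qed.

Lemma history_rcons (T : eqType) (strat : strategy T) w c :
  history strat (rcons w c) =
  rcons (history strat w) (strat (history strat w), strat (history strat w) == c).
Proof. exact: play_aux_rcons. Qed.

Lemma sumW_rcons (R : realType) n (i : 'I_n) F pre w c :
  sumW i F pre (rcons w c) = sumW i F pre w + F (pre ++ w) (c == i) :> R.
Proof.
elim: w pre => [|c' w IH] pre /=; first by rewrite cats0 add0r addr0.
by rewrite IH addrA cat_rcons.
Qed.

Lemma prodW_exp (R : realType) n (i : 'I_n) (f : seq 'I_n -> bool -> R) pre w :
  prodW i (fun p b => expR (f p b)) pre w = expR (sumW i f pre w).
Proof.
elim: w pre => [|c w IH] pre /=; first by rewrite expR0.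
by rewrite IH expRD.
Qed.

Lemma sumW_big (R : realType) n (i : 'I_n) F pre w :
  sumW i F pre w = \sum_(t < size w) F (pre ++ take t w) (nth i w t == i) :> R.
Proof.
elim: w pre => [|c w IH] pre /=; first by rewrite big_ord0.
rewrite big_ord_recl /= cats0 IH; congr (_ + _).
by apply: eq_bigr => t _; rewrite cat_rcons.
Qed.

Lemma is_critical_take (R : realType) (eps : R) m n (T : eqType) (i : T) H H' t :
  take t H = take t H' -> is_critical eps m n i H t = is_critical eps m n i H' t.
Proof. by rewrite /is_critical => ->. Qed.

Lemma count_rcons' (T : Type) (a : pred T) s x :
  count a (rcons s x) = (count a s + a x)%N.
Proof. by rewrite -cats1 count_cat /= addn0. Qed.

Lemma mem_zip1 (S T : eqType) (s : seq S) (t : seq T) x y :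
  (x, y) \in zip s t -> x \in s.
Proof.
elim: s t => [|a s IH] [|b t] //=; rewrite !inE => /orP[/eqP[-> _]|/IH ->].
  by rewrite eqxx.
by rewrite orbT.
Qed.

Lemma count_crit_rcons (R : realType) (eps : R) m n (T : eqType) (i : T)
   (Q : T * bool -> bool) H x :
  count (fun tp : nat * (T * bool) => Q tp.2 && is_critical eps m n i (rcons H x) tp.1)
    (zip (iota 0 (size (rcons H x))) (rcons H x)) =
  (count (fun tp : nat * (T * bool) => Q tp.2 && is_critical eps m n i H tp.1)
    (zip (iota 0 (size H)) H) + (Q x && is_critical eps m n i H (size H)))%N.
Proof.
have Hi : iota 0 (size H).+1 = rcons (iota 0 (size H)) (size H).
  by rewrite -addn1 iotaD add0n /= cats1.
rewrite size_rcons Hi zip_rcons ?size_iota //.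
rewrite count_rcons'; congr (_ + _)%N.
- apply: eq_in_count => -[t y] /mem_zip1 Ht /=; congr (_ && _).
  apply: is_critical_take; rewrite -cats1 takel_cat //.
  by move: Ht; rewrite mem_iota add0n => /andP[_ /ltnW].
- congr (_ && _); apply: is_critical_take.
  by rewrite -cats1 takel_cat // take_size.
Qed.

Definition sel (R : realType) (eps : R) m n (strat : strategy 'I_n) (i : 'I_n)
   (pre : seq 'I_n) : bool :=
  (strat (history strat pre) == i) &&
  is_critical eps m n i (history strat pre) (size pre).

Lemma Y_hist (R : realType) (eps : R) m n (strat : strategy 'I_n) (i : 'I_n) w :
  (Y_count eps m n i (history strat w))%:R =
  sumW i (fun pre b => (sel eps m strat i pre && b)%:R) [::] w :> R.
Proof.
elim/last_ind: w => [|w c IH]; first by [].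
rewrite sumW_rcons /= -IH history_rcons /Y_count.
rewrite (eq_count (a2 := fun tp : nat * ('I_n * bool) =>
   ((tp.2.1 == i) && tp.2.2) && is_critical eps m n i
     (rcons (history strat w) (strat (history strat w), strat (history strat w) == c)) tp.1)); last first.
  by move=> tp; rewrite andbA.
rewrite (@count_crit_rcons _ eps m n _ i (fun y => (y.1 == i) && y.2)) natrD; congr (_ + _).
  by congr (_%:R); apply: eq_count => tp; rewrite andbA.
rewrite /sel size_history /=; congr (_%:R).
case: (strat (history strat w) =P i) => [->|] //=.
by rewrite eq_sym; case: (c == i); rewrite ?andbT ?andbF.
Qed.

Lemma b_hist (R : realType) (eps : R) m n (strat : strategy 'I_n) (i : 'I_n) w :
  (b_count eps m n i (history strat w))%:R =
  sumW i (fun pre b => (sel eps m strat i pre)%:R) [::] w :> R.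
Proof.
elim/last_ind: w => [|w c IH]; first by [].
rewrite sumW_rcons /= -IH history_rcons /b_count.
rewrite (@count_crit_rcons _ eps m n _ i (fun y => y.1 == i)) natrD; congr (_ + _).
by rewrite /sel size_history.
Qed.
Definition Vb (R : realType) (L : nat) (x : R) (r Rr : nat) : R :=
  (1 + (if (Rr <= L)%N then 1 else L%:R / Rr%:R) * (x - 1)) ^+ r.

Lemma bern (R : realType) (b d : R) k : 0 <= d -> d <= b ->
  b ^+ k.+1 - k.+1%:R * d * b ^+ k <= (b - d) ^+ k.+1.
Proof.
move=> d0 db; have b0 : 0 <= b by apply: le_trans db.
elim: k => [|k IH]; first by rewrite expr1 expr0 mulr1 mul1r.
have H1 : (b - d) * (b ^+ k.+1 - k.+1%:R * d * b ^+ k) <= (b - d) ^+ k.+2.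
  by rewrite (exprS (b - d) k.+1) ler_wpM2l // subr_ge0.
apply: le_trans H1; rewrite -subr_ge0.
have Pk : 0 <= b ^+ k by rewrite exprn_ge0.
have -> : (b - d) * (b ^+ k.+1 - k.+1%:R * d * b ^+ k) -
   (b ^+ k.+2 - k.+2%:R * d * b ^+ k.+1) = k.+1%:R * (d * d) * b ^+ k.
  rewrite !exprS [k.+2%:R]mulrS; ring.
by rewrite !mulr_ge0 // ler0n.
Qed.

Lemma Vb_step (R : realType) (L : nat) (x : R) r Rr :
  (0 < L)%N -> 1 <= x -> (L < Rr)%N -> (r <= Rr)%N ->
  r%:R / Rr%:R * Vb L x r.-1 Rr.-1 + (1 - r%:R / Rr%:R) * Vb L x r Rr.-1
    <= Vb L x r Rr.
Proof.
move=> L0 x1 LR rR.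
case: Rr LR rR => // k LR rR.
have Lk : (L <= k)%N by [].
have k0 : (0 < k)%N by apply: leq_trans Lk.
have kR : (k%:R : R) != 0 by rewrite pnatr_eq0 -lt0n.
have kR1 : (k.+1%:R : R) != 0 by rewrite pnatr_eq0.
have HL : (k.+1 <= L)%N = false by rewrite leqNgt LR.
rewrite /Vb /= HL.
have -> : (if (k <= L)%N then 1 else L%:R / k%:R) = L%:R / k%:R :> R.
  case: ifP => // kL; have -> : k = L by apply/eqP; rewrite eqn_leq kL Lk.
  by rewrite divff // pnatr_eq0 -lt0n.
set v := L%:R / k%:R * (x - 1).
have v0 : 0 <= v by rewrite /v mulr_ge0 ?divr_ge0 ?ler0n // subr_ge0.
set d := v / k.+1%:R.
have d0 : 0 <= d by rewrite /d divr_ge0 ?ler0n.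
have E : 1 + L%:R / k.+1%:R * (x - 1) = (1 + v) - d.
  by rewrite /d /v [k.+1%:R]mulrS; field; rewrite -mulrS kR1 kR.
rewrite E.
case: r rR => [|s] rR; first by rewrite !expr0 !mul0r mulr1 add0r subr0.
have db : d <= 1 + v.
  apply: (le_trans (y := v)); last by lra.
  by rewrite /d ler_pdivrMr ?ltr0Sn // ler_peMr // ler1n.
apply: le_trans (bern s d0 db); rewrite le_eqVlt; apply/orP; left; apply/eqP.
rewrite /= exprS /d; field; by rewrite -mulrS.
Qed.
Lemma dp_deck (R : realType) m n (i : 'I_n) (F : seq 'I_n -> bool -> R)
   (V : nat -> nat -> R) :
  (forall pre b, 0 <= F pre b) -> 1 <= V 0%N 0%N ->
  (forall pre r Rr, (0 < Rr)%N -> (r <= Rr)%N ->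
     (r + count_mem i pre = m)%N -> (Rr + size pre = m * n)%N ->
     r%:R / Rr%:R * F pre true * V r.-1 Rr.-1
       + (1 - r%:R / Rr%:R) * F pre false * V r Rr.-1 <= V r Rr) ->
  \sum_(w in deck m n) prodW i F [::] (val w) <= V m (m * n)%N * #|deck m n|%:R.
Proof.
move=> F0 V1 HV.
have := @dp R n i F V m (m * n)%N F0 V1 HV (m * n)%N (fun _ => m) [::].
apply; by [rewrite sum_nat_const card_ord mulnC | rewrite addn0 | rewrite addn0].
Qed.

Definition pp (R : realType) m n (i : 'I_n) (pre : seq 'I_n) : R :=
  (m - count_mem i pre)%:R / (m * n - size pre)%:R.

Lemma pp_link (R : realType) m n (i : 'I_n) pre r Rr :
  (r + count_mem i pre = m)%N -> (Rr + size pre = m * n)%N ->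
  r%:R / Rr%:R = pp R m i pre.
Proof. by rewrite /pp => <- <-; rewrite !addnK. Qed.

Lemma pp_ge0 (R : realType) m n (i : 'I_n) pre : 0 <= pp R m i pre.
Proof. by rewrite /pp divr_ge0 ?ler0n. Qed.

Definition f1 (R : realType) (eps th : R) m n (strat : strategy 'I_n) (i : 'I_n)
  (pre : seq 'I_n) (b : bool) : R :=
  th * (sel eps m strat i pre && b)%:R
  - (expR th - 1) * ((sel eps m strat i pre)%:R * pp R m i pre).

Lemma sum_F1 (R : realType) (eps th : R) m n (strat : strategy 'I_n) (i : 'I_n) :
  \sum_(w in deck m n) expR (sumW i (f1 eps th m strat i) [::] (val w))
    <= #|deck m n|%:R.
Proof.
rewrite -[X in _ <= X]mul1r.
under eq_bigr => w _ do rewrite -prodW_exp.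
apply: (dp_deck (V := fun _ _ => 1)) => //.
move=> pre r Rr _ _ Hr HR.
rewrite (pp_link R Hr HR) !mulr1 /f1.
set p := pp R m i pre.
case: (sel eps m strat i pre) => /=; last first.
  by rewrite !(mulr0, mul0r) subr0 expR0 !mulr1 addrC subrK.
rewrite !mulr1 !mul1r mulr0 sub0r.
have -> : th - (expR th - 1) * p = th + - ((expR th - 1) * p) by [].
rewrite expRD.
have H := expR_ge1Dx ((expR th - 1) * p).
have H2 := expRxMexpNx_1 ((expR th - 1) * p).
have Hp : 0 < expR (- ((expR th - 1) * p)) by apply: expR_gt0.
set u := expR (- _) in H2 Hp *; set e := expR ((expR th - 1) * p) in H H2.
have -> : p * (expR th * u) + (1 - p) * u = u * (1 + (expR th - 1) * p) by ring.
rewrite -[X in _ <= X]H2 mulrC; apply: ler_wpM2r; [exact: ltW | exact: H].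
Qed.
Lemma reg_eq (m n L s Rr : nat) : (Rr + s = m * n)%N ->
  (m * n - L <= s)%N = (Rr <= L)%N.
Proof. move=> H; apply/idP/idP; lia. Qed.

Definition f2 (R : realType) m n (i : 'I_n) (T1 : nat) (pre : seq 'I_n) (b : bool) : R :=
  2^-1 * ((T1 <= size pre)%N%:R * pp R m i pre).

Lemma sum_F2 (R : realType) m n (i : 'I_n) (L1 : nat) : (0 < L1)%N ->
  \sum_(w in deck m n) expR (sumW i (f2 R m i (m * n - L1)) [::] (val w))
    <= Vb L1 (2 : R) m (m * n) * #|deck m n|%:R.
Proof.
move=> L10.
under eq_bigr => w _ do rewrite -prodW_exp.
apply: dp_deck => //.
move=> pre r Rr R0 rR Hr HR.
rewrite /f2 -(pp_link R Hr HR) (reg_eq _ HR).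
case: (leqP Rr L1) => RL.
- have RL' : (Rr.-1 <= L1)%N by apply: leq_trans RL; exact: leq_pred.
  rewrite /Vb RL RL' !mul1r.
  have -> : (1 + (2 - 1) : R) = 2 by lra.
  case: r rR {Hr} => [|s] rR; first by rewrite !(mul0r, mulr0, subr0, mul1r, expR0, expr0).
  set p := s.+1%:R / Rr%:R.
  have key : expR (2^-1 * p) * (2 - p) <= 2.
    have H := expR_ge1Dx (- (2^-1 * p)).
    have H2 := expRxMexpNx_1 (2^-1 * p).
    have Hp : 0 < expR (2^-1 * p) by apply: expR_gt0.
    set e := expR (2^-1 * p) in H2 Hp *.
    have : e * (1 + - (2^-1 * p)) <= e * expR (- (2^-1 * p)).
      by apply: ler_wpM2l => //; exact: ltW.
    by rewrite H2; lra.
  have -> : p * expR (2^-1 * p) * 2 ^+ s.+1.-1 + (1 - p) * expR (2^-1 * p) * 2 ^+ s.+1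
     = 2 ^+ s * (expR (2^-1 * p) * (2 - p)).
    by rewrite /= exprS; ring.
  by rewrite exprS mulrC; apply: ler_wpM2r => //; rewrite exprn_ge0.
- rewrite !(mul0r, mulr0) expR0 !mulr1.
  by apply: Vb_step => //; lra.
Qed.

Definition f3 (R : realType) (th : R) n (i : 'I_n) (T : nat) (pre : seq 'I_n) (b : bool) : R :=
  th * ((T <= size pre)%N && b)%:R.

Lemma sum_F3 (R : realType) (th : R) m n (i : 'I_n) (L : nat) : (0 < L)%N -> 0 <= th ->
  \sum_(w in deck m n) expR (sumW i (f3 th i (m * n - L)) [::] (val w))
    <= Vb L (expR th) m (m * n) * #|deck m n|%:R.
Proof.
move=> L0 th0.
under eq_bigr => w _ do rewrite -prodW_exp.
apply: dp_deck => //.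
move=> pre r Rr R0 rR Hr HR.
rewrite /f3 (reg_eq _ HR).
case: (leqP Rr L) => RL.
- have RL' : (Rr.-1 <= L)%N by apply: leq_trans RL; exact: leq_pred.
  rewrite /Vb RL RL' !mul1r andbT andbF mulr0 mulr1 expR0 mulr1.
  have -> : 1 + (expR th - 1) = expR th by ring.
  case: r rR {Hr} => [|s] rR; first by rewrite !(mul0r, mulr0, subr0, mul1r, expR0, expr0).
  rewrite /= exprS; rewrite le_eqVlt; apply/orP; left; apply/eqP; ring.
- rewrite !andbF mulr0 expR0 !mulr1.
  apply: Vb_step => //.
  by have := expR_ge1Dx th; lra.
Qed.
Lemma sumW_add (R : realType) n (i : 'I_n) (f g : seq 'I_n -> bool -> R) pre w :
  sumW i (fun p b => f p b + g p b) pre w = sumW i f pre w + sumW i g pre w.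
Proof. by elim: w pre => [|c w IH] pre /=; rewrite ?addr0 // IH; ring. Qed.

Lemma sumW_scale (R : realType) n (i : 'I_n) (a : R) (f : seq 'I_n -> bool -> R) pre w :
  sumW i (fun p b => a * f p b) pre w = a * sumW i f pre w.
Proof. by elim: w pre => [|c w IH] pre /=; rewrite ?mulr0 // IH mulrDr. Qed.

Lemma sumW_le (R : realType) n (i : 'I_n) (f g : seq 'I_n -> bool -> R) w :
  (forall t, (t < size w)%N -> f (take t w) (nth i w t == i) <= g (take t w) (nth i w t == i)) ->
  sumW i f [::] w <= sumW i g [::] w.
Proof. by move=> H; rewrite !sumW_big; apply: ler_sum => t _; exact: H. Qed.

Lemma Ck_drop (R : realType) n (i : 'I_n) (T : nat) pre w :
  sumW i (fun p b => ((T <= size p)%N && b)%:R) pre w =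
  (count_mem i (drop (T - size pre) w))%:R :> R.
Proof.
elim: w pre => [|c w IH] pre /=; first by case: (T - size pre)%N.
rewrite IH size_rcons.
case: (leqP T (size pre)) => H /=.
- have -> : (T - size pre = 0)%N by apply/eqP; rewrite subn_eq0.
  have -> : (T - (size pre).+1 = 0)%N by apply/eqP; rewrite subn_eq0 ltnW // ltnS.
  by rewrite !drop0 /= natrD.
- have -> : (T - size pre = (T - (size pre).+1).+1)%N by lia.
  by rewrite /= add0r.
Qed.

Lemma count_drop_le (T : eqType) (a : pred T) k (s : seq T) :
  (count a (drop k s) <= count a s)%N.
Proof. by rewrite -{2}(cat_take_drop k s) count_cat leq_addl. Qed.

Lemma good_pp (R : realType) (eps : R) m n (i : 'I_n) (w : seq 'I_n) (K t : nat) :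
  (0 < n)%N -> 0 <= eps -> size w = (m * n)%N -> count_mem i w = m ->
  (forall k, (K <= k)%N -> (k < m)%N ->
     (count_mem i (drop (m * n - k.+1 * n) w))%:R <= (1 + 2 * eps) * k%:R) ->
  (t < m * n)%N -> (K * n < m * n - t)%N ->
  pp R m i (take t w) <= (1 + 2 * eps) / n%:R.
Proof.
move=> n0 eps0 Hsz Hc Hg Ht HK.
rewrite /pp size_take Hsz Ht.
have Hcd : (m - count_mem i (take t w) = count_mem i (drop t w))%N.
  by rewrite -{1}Hc -{1}(cat_take_drop t w) count_cat addKn.
rewrite Hcd.
set Rt := (m * n - t)%N.
have Rt0 : (0 < Rt)%N by rewrite /Rt subn_gt0.
set k := (Rt.-1 %/ n)%N.
have k1 : (k * n <= Rt.-1)%N by apply: leq_trunc_div.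
have k2 : (Rt.-1 < k.+1 * n)%N by apply: ltn_ceil.
have kK : (K <= k)%N by rewrite leq_divRL //; lia.
have km : (k < m)%N by rewrite ltn_divLR //; lia.
have Hle : (count_mem i (drop t w) <= count_mem i (drop (m * n - k.+1 * n) w))%N.
  have -> : t = ((t - (m * n - k.+1 * n)) + (m * n - k.+1 * n))%N by lia.
  by rewrite -drop_drop count_drop_le.
have H1 := Hg k kK km.
have Rtr : (0 : R) < Rt%:R by rewrite ltr0n.
have nr : (0 : R) < n%:R by rewrite ltr0n.
rewrite ler_pdivrMr // mulrAC ler_pdivlMr //.
apply: (le_trans (y := (1 + 2 * eps) * k%:R * n%:R)).
  apply: ler_wpM2r; first exact: ltW.
  by apply: le_trans H1; rewrite ler_nat.
rewrite -mulrA ler_wpM2l //; first lra.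
by rewrite -natrM ler_nat; lia.
Qed.
Lemma S_bound (R : realType) (eps : R) m n (strat : strategy 'I_n) (i : 'I_n)
   (w : seq 'I_n) (K : nat) :
  (0 < n)%N -> 0 <= eps -> size w = (m * n)%N -> count_mem i w = m ->
  (forall k, (K <= k)%N -> (k < m)%N ->
     (count_mem i (drop (m * n - k.+1 * n) w))%:R <= (1 + 2 * eps) * k%:R) ->
  sumW i (fun p b => (sel eps m strat i p)%:R * pp R m i p) [::] w <=
  (1 + 2 * eps) / n%:R * sumW i (fun p b => (sel eps m strat i p)%:R) [::] w
  + sumW i (fun p b => (m * n - K * n <= size p)%N%:R * pp R m i p) [::] w.
Proof.
move=> n0 eps0 Hsz Hc Hg.
rewrite -sumW_scale -sumW_add; apply: sumW_le => t Ht.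
rewrite size_take Ht.
have pp0 := pp_ge0 R m i (take t w).
have q0 : 0 <= (1 + 2 * eps) / n%:R by rewrite divr_ge0 ?ler0n //; lra.
case: leqP => HT.
- rewrite mul1r; case: (sel _ _ _ _ _); rewrite ?mul1r ?mul0r ?mulr1 ?mulr0; lra.
- rewrite mul0r addr0.
  have := good_pp n0 eps0 Hsz Hc Hg (t := t) _ _.
  rewrite -Hsz Ht => /(_ isT) H; rewrite Hsz in H.
  have HK : (K * n < m * n - t)%N by lia.
  have := H HK.
  by case: (sel _ _ _ _ _); rewrite ?mul1r ?mul0r ?mulr1 ?mulr0.
Qed.

Lemma pow_le_exp (R : realType) (y : R) m : 0 <= y -> (1 + y) ^+ m <= expR (y * m%:R).
Proof.
move=> y0; rewrite expRM_natr; apply: lerXn2r; rewrite ?nnegrE ?expR_ge0 //.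
  lra.
exact: expR_ge1Dx.
Qed.

Lemma Vb_le (R : realType) (L : nat) (x : R) m n : 1 <= x -> (0 < n)%N ->
  Vb L x m (m * n) <= expR ((x - 1) * (L%:R / n%:R)).
Proof.
move=> x1 n0; rewrite /Vb.
have nr : (0 : R) < n%:R by rewrite ltr0n.
case: ifP => HL.
- rewrite mul1r; apply: le_trans (pow_le_exp _ _) _; first lra.
  rewrite ler_expR ler_wpM2l //; first lra.
  by rewrite ler_pdivlMr // -natrM ler_nat.
- apply: le_trans (pow_le_exp _ _) _.
    by rewrite mulr_ge0 ?divr_ge0 ?ler0n //; lra.
  rewrite ler_expR le_eqVlt; apply/orP; left; apply/eqP.
  case: m HL => [|m] HL; first by rewrite mul0n in HL.
  rewrite natrM; field.
  by rewrite -mulrS !pnatr_eq0 -!lt0n n0.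
Qed.

Lemma mexp (R : realType) (a : R) m : 0 < a ->
  m%:R * expR (- (a * m%:R)) <= 2 / a * expR (- (a * m%:R / 2)).
Proof.
move=> a0.
have H := expR_ge1Dx (a * m%:R / 2).
have E : expR (- (a * m%:R)) = expR (- (a * m%:R / 2)) * expR (- (a * m%:R / 2)).
  by rewrite -expRD; congr expR; field.
have E2 := expRxMexpNx_1 (a * m%:R / 2).
set u := expR (- (a * m%:R / 2)) in E E2 *.
set e := expR (a * m%:R / 2) in H E2.
have u0 : 0 <= u by apply: expR_ge0.
rewrite E.
have -> : m%:R * (u * u) = 2 / a * ((a * m%:R / 2) * u) * u by field; rewrite gt_eqF.
apply: ler_wpM2r => //.
rewrite -[X in _ <= X]mulr1 ler_pM2l ?divr_gt0 //.
rewrite -[X in _ <= X]E2; apply: ler_wpM2r => //; lra.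
Qed.
Lemma sumW_lin (R : realType) n (i : 'I_n) (a c : R) (f g : seq 'I_n -> bool -> R) pre w :
  sumW i (fun p b => a * f p b - c * g p b) pre w = a * sumW i f pre w - c * sumW i g pre w.
Proof. by elim: w pre => [|x w IH] pre /=; rewrite ?mulr0 ?subr0 // IH; ring. Qed.

Lemma prob_le (R : realType) m n (P : pred ((m * n).-tuple 'I_n))
   (G : (m * n).-tuple 'I_n -> R) (T : R) :
  (forall w, w \in deck m n -> 0 <= G w) ->
  (forall w, w \in deck m n -> P w -> 1 <= G w) ->
  \sum_(w in deck m n) G w <= T * #|deck m n|%:R -> 0 <= T ->
  prob_deck R P <= T.
Proof.
move=> G0 G1 HT T0; rewrite /prob_deck.
have Hc : #|[set w in deck m n | P w]|%:R <= \sum_(w in deck m n) G w.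
  rewrite -sum1_card natr_sum big_mkcond [X in _ <= X]big_mkcond /=.
  apply: ler_sum => w _; rewrite inE.
  case Hw: (w \in deck m n) => /=; last by [].
  by case HP: (P w); [exact: G1 | exact: G0].
case: (posnP #|deck m n|) => [->|Dp].
  by rewrite invr0 mulr0.
rewrite ler_pdivrMr ?ltr0n //.
exact: le_trans Hc HT.
Qed.

Lemma Vb_ge0 (R : realType) (L : nat) (x : R) r Rr : 1 <= x -> 0 <= Vb L x r Rr.
Proof.
move=> x1; rewrite /Vb exprn_ge0 //.
case: ifP => _; first lra.
have : 0 <= L%:R / Rr%:R :> R by rewrite divr_ge0 ?ler0n.
set c := L%:R / Rr%:R => c0.
have : 0 <= c * (x - 1) by rewrite mulr_ge0 //; lra.
lra.
Qed.

Lemma sumW_ge0 (R : realType) n (i : 'I_n) (f : seq 'I_n -> bool -> R) pre w :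
  (forall p b, 0 <= f p b) -> 0 <= sumW i f pre w.
Proof. by move=> H; rewrite sumW_big sumr_ge0. Qed.
Theorem lemma3p12 (R : realType) (eps : R) :
  0 < eps -> eps <= 1 / 4 ->
  exists c c' : R, 0 < c /\ 0 < c' /\
  forall m : nat, (0 < m)%N ->
  exists N : nat, forall n : nat, (N <= n)%N ->
  forall (strat : strategy 'I_n) (i : 'I_n),
    @prob_deck R m n (fun w =>
      let H := history strat (val w) in
      (1 + 4 * eps) * (b_count eps m n i H)%:R / n%:R + eps ^+ 2 * m%:R
        < (Y_count eps m n i H)%:R)
    <= c' * eps ^- 2 * expR (- (c * eps ^+ 4 * m%:R)).
Proof.
move=> eps0 eps4.
set th := eps / 2.
have th0 : 0 < th by rewrite /th; lra.
have Ep0 : 0 <= expR th - 1 by have := expR_ge1Dx th; lra.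
have Ep1 : expR th - 1 <= th * (1 + eps).
  have H := expR_ge1Dx (- th).
  have E2 := expRxMexpNx_1 th.
  have Hx : expR th * (1 - th) <= 1.
    rewrite -[X in _ <= X]E2; apply: ler_wpM2l; [exact: expR_ge0 | lra].
  have e0 : 0 <= expR th by exact: expR_ge0.
  rewrite /th in Hx e0 *; nra.
have e4 : 0 < eps ^+ 4 by rewrite exprn_gt0.
exists (1 / 64), (192 * expR 1 / eps ^+ 2); split; first lra.
split; first by rewrite divr_gt0 ?exprn_gt0 // mulr_gt0 // expR_gt0.
move=> m m0; exists 0%N => n _ strat i.
have n0 : (0 < n)%N by case: n i strat => [[]|].
set N := (m * n)%N.
set e2 := eps ^+ 2 * m%:R.
have e20 : 0 <= e2 by rewrite /e2 mulr_ge0 ?ler0n ?exprn_ge0 // ltW.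
set K := (Num.trunc (e2 / 16)).+1.
have K1 : e2 / 16 < K%:R by exact: truncnS_gt.
have K2 : K%:R <= e2 / 16 + 1.
  rewrite /K -addn1 natrD lerD2r truncn_le divr_ge0 //.
set z := e2 / 4.
set Ep := expR th - 1.
pose A (w : N.-tuple 'I_n) := expR (- (th * e2 / 2)) *
   expR (sumW i (f1 eps th m strat i) [::] (val w)).
pose B (w : N.-tuple 'I_n) := expR (- (2^-1 * z)) *
   expR (sumW i (f2 R m i (N - K * n)) [::] (val w)).
pose C (k : nat) (w : N.-tuple 'I_n) := expR (- (th * ((1 + 2 * eps) * k%:R))) *
   expR (sumW i (f3 th i (N - k.+1 * n)) [::] (val w)).
pose T := expR (- (th * e2 / 2)) + expR (- (2^-1 * z)) * Vb (K * n) (2:R) m N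
   + \sum_(k < m | (K <= k)%N)
        expR (- (th * ((1 + 2 * eps) * k%:R))) * Vb (k.+1 * n) (expR th) m N.
have Vb2 : 1 <= (2 : R) by lra.
have Vbe : 1 <= expR th by have := expR_ge1Dx th; lra.
have T0 : 0 <= T.
  rewrite /T !addr_ge0 ?mulr_ge0 ?expR_ge0 ?Vb_ge0 //.
  by apply: sumr_ge0 => k _; rewrite mulr_ge0 ?expR_ge0 ?Vb_ge0.
have A0 : forall w, 0 <= A w by move=> w; rewrite mulr_ge0 ?expR_ge0.
have B0 : forall w, 0 <= B w by move=> w; rewrite mulr_ge0 ?expR_ge0.
have C0 : forall w, 0 <= \sum_(k < m | (K <= k)%N) C k w.
  by move=> w; apply: sumr_ge0 => k _; rewrite mulr_ge0 ?expR_ge0.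
apply: (le_trans (prob_le (G := fun w => A w + B w + \sum_(k < m | (K <= k)%N) C k w)
   (T := T) _ _ _ T0)).
- by move=> w _; rewrite !addr_ge0.
- move=> w Hw /= HE.
  have Hsz : size (val w) = N by rewrite size_tuple.
  have Hc : count_mem i (val w) = m.
    by move: Hw; rewrite inE => /forallP /(_ i) /eqP.
  rewrite Y_hist b_hist in HE.
  have hA := A0 w; have hB := B0 w; have hC := C0 w.
  case: (boolP [exists k : 'I_m, (K <= k)%N && ((1 + 2 * eps) * k%:R <
      (count_mem i (drop (N - k.+1 * n) (val w)))%:R)]).
  + case/existsP => k /andP[Kk Hk].
    have Ck1 : 1 <= C k w.
      rewrite /C -expRD /f3 sumW_scale Ck_drop /= subn0.
      apply: le_trans (expR_ge1Dx _); rewrite lerDl.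
      move: Hk; rewrite -subr_gt0 => Hk.
      have := mulr_ge0 (ltW th0) (ltW Hk).
      lra.
    have : C k w <= \sum_(k0 < m | (K <= k0)%N) C k0 w.
      rewrite (bigD1 k) //= lerDl; apply: sumr_ge0 => j _.
      by rewrite mulr_ge0 ?expR_ge0.
    lra.
  + move/existsPn => Hn.
    have Hg : forall k, (K <= k)%N -> (k < m)%N ->
        (count_mem i (drop (m * n - k.+1 * n) (val w)))%:R <= (1 + 2 * eps) * k%:R.
      by move=> k Kk km; have := Hn (Ordinal km); rewrite /= Kk /= -leNgt.
    set Z := sumW i (fun p b => (N - K * n <= size p)%N%:R * pp R m i p) [::] (val w).
    case: (leP Z z) => HZ.
    * suff : 1 <= A w by lra.
      have HS : sumW i (fun p b => (sel eps m strat i p)%:R * pp R m i p) [::] (val w) <=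
          (1 + 2 * eps) / n%:R * sumW i (fun p b => (sel eps m strat i p)%:R) [::] (val w)
          + Z := @S_bound R eps m n strat i (val w) K n0 (ltW eps0) Hsz Hc Hg.
      rewrite /A -expRD /f1.
      rewrite (sumW_lin i th (expR th - 1) (fun p b => (sel eps m strat i p && b)%:R)
                 (fun p b => (sel eps m strat i p)%:R * pp R m i p)).
      apply: le_trans (expR_ge1Dx _); rewrite lerDl.
      set Yw := sumW i (fun p b => (sel eps m strat i p && b)%:R) [::] (val w) in HE *.
      set bw := sumW i (fun p b => (sel eps m strat i p)%:R) [::] (val w) in HE HS.
      set Sw := sumW i (fun p b => (sel eps m strat i p)%:R * pp R m i p) [::] (val w) in HS *.
      have hb : 0 <= bw by apply: sumW_ge0 => p b; rewrite ler0n.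
      have nr : (0 : R) < n%:R by rewrite ltr0n.
      set bn := bw / n%:R.
      have hbn : 0 <= bn by rewrite divr_ge0 // ltW.
      have eq1 : (1 + 4 * eps) * bw / n%:R = (1 + 4 * eps) * bn by rewrite /bn mulrA.
      have eq2 : (1 + 2 * eps) / n%:R * bw = (1 + 2 * eps) * bn.
        by rewrite /bn mulrAC -mulrA.
      rewrite eq1 in HE; rewrite eq2 in HS.
      have h1 : th * ((1 + 4 * eps) * bn + e2) <= th * Yw.
        by apply: ler_wpM2l; [exact: ltW | exact: ltW].
      have h2 : (expR th - 1) * Sw <= (expR th - 1) * ((1 + 2 * eps) * bn + z).
        by apply: ler_wpM2l => //; lra.
      have hq : 0 <= (1 + 2 * eps) * bn + z.
        by rewrite addr_ge0 ?mulr_ge0 //; rewrite /z; lra.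
      have h3 : (expR th - 1) * ((1 + 2 * eps) * bn + z) <=
                th * (1 + eps) * ((1 + 2 * eps) * bn + z).
        by apply: ler_wpM2r.
      have h4 : 0 <= th * bn * (eps - 2 * eps ^+ 2).
        by rewrite mulr_ge0 ?mulr_ge0 // ?ltW //; nra.
      have h5 : 0 <= th * e2 * (1 - eps).
        by rewrite mulr_ge0 ?mulr_ge0 // ?ltW //; lra.
      move: h1 h2 h3 h4 h5; rewrite /z; lra.
    * suff : 1 <= B w by lra.
      rewrite /B -expRD /f2 sumW_scale -/Z.
      apply: le_trans (expR_ge1Dx _); rewrite lerDl.
      lra.
- rewrite !big_split /= exchange_big /=.
  rewrite /T mulrDl mulrDl mulr_suml.
  apply: lerD; first apply: lerD.
  + rewrite /A -mulr_sumr; apply: ler_wpM2l; first exact: expR_ge0.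
    exact: sum_F1.
  + rewrite /B -mulr_sumr -mulrA; apply: ler_wpM2l; first exact: expR_ge0.
    by apply: sum_F2; rewrite muln_gt0 n0.
  + apply: ler_sum => k _.
    have k0 : (0 < k.+1 * n)%N by rewrite muln_gt0 n0.
    have HF := @sum_F3 R th m n i (k.+1 * n) k0 (ltW th0).
    rewrite /C -mulr_sumr.
    apply: le_trans (ler_wpM2l (expR_ge0 _) HF) _.
    by rewrite (mulrA (expR _)).
- set X := expR (- (1 / 64 * eps ^+ 4 * m%:R)).
  set e := expR 1.
  have e1 : 1 <= e by have := expR_ge1Dx (1 : R); rewrite /e; lra.
  have X0 : 0 <= X by exact: expR_ge0.
  have eps1 : eps ^+ 4 <= 1 by rewrite exprn_ile1 // ?ltW //; lra.
  set M := 64 * e / eps ^+ 4.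
  have Me : e <= M.
    rewrite /M ler_pdivlMr // mulrC; apply: ler_wpM2r; lra.
  have -> : 192 * e / eps ^+ 2 * eps ^- 2 = 3 * M.
    by rewrite /M; field; rewrite gt_eqF.
  have hX1 : X <= M * X by rewrite -[X in X <= _]mul1r; apply: ler_wpM2r => //; lra.
  have hX2 : e * X <= M * X by apply: ler_wpM2r.
  have mr0 : (0 : R) <= m%:R by rewrite ler0n.
  have nr : (n%:R : R) != 0 by rewrite pnatr_eq0 -lt0n.
  have e3 : 0 <= eps ^+ 3 * m%:R by rewrite mulr_ge0 // exprn_ge0 // ltW.
  have e42 : eps ^+ 4 * m%:R <= e2.
    rewrite /e2; apply: ler_wpM2r => //.
    have : eps ^+ 2 <= 1 by rewrite exprn_ile1 // ?ltW //; lra.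
    rewrite (_ : eps ^+ 4 = eps ^+ 2 * eps ^+ 2); last by rewrite -exprD.
    move=> h2; rewrite -[X in _ <= X]mulr1; apply: ler_wpM2l => //.
    by rewrite exprn_ge0 // ltW.
  have tA : expR (- (th * e2 / 2)) <= X.
    rewrite ler_expR lerN2 /th /e2.
    have h : 0 <= 1 / 4 - eps / 64 by lra.
    have := mulr_ge0 e3 h.
    have -> : eps / 2 * (eps ^+ 2 * m%:R) / 2 = eps ^+ 3 * m%:R / 4 by field.
    have -> : 1 / 64 * eps ^+ 4 * m%:R = eps * (eps ^+ 3 * m%:R) / 64 by field.
    nra.
  have tB : expR (- (2^-1 * z)) * Vb (K * n) 2 m N <= e * X.
    apply: le_trans (ler_wpM2l (expR_ge0 _) (Vb_le (K * n) m Vb2 n0)) _.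
    rewrite /e /X -!expRD ler_expR natrM mulfK //.
    rewrite /z; lra.
  have tC : \sum_(k < m | (K <= k)%N)
        expR (- (th * ((1 + 2 * eps) * k%:R))) * Vb (k.+1 * n) (expR th) m N <= M * X.
    have hk : forall k : 'I_m, (K <= k)%N ->
        expR (- (th * ((1 + 2 * eps) * k%:R))) * Vb (k.+1 * n) (expR th) m N
        <= e * expR (- (eps ^+ 4 / 32 * m%:R)).
      move=> k Kk.
      apply: le_trans (ler_wpM2l (expR_ge0 _) (Vb_le (k.+1 * n) m Vbe n0)) _.
      rewrite /e -!expRD ler_expR natrM mulfK // -/Ep.
      have h1 : Ep * (k.+1%:R) <= th * (1 + eps) * k.+1%:R.
        by apply: ler_wpM2r; rewrite ?ler0n.
      have kK : (K%:R : R) <= k%:R by rewrite ler_nat.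
      have h2 : eps / 2 * eps * K%:R <= eps / 2 * eps * k%:R.
        by apply: ler_wpM2l => //; rewrite mulr_ge0 //; lra.
      have h3 : eps / 2 * eps * (e2 / 16) <= eps / 2 * eps * K%:R.
        by apply: ler_wpM2l; [rewrite mulr_ge0 //; lra | exact: ltW].
      have h4 : eps * eps <= 1 / 16 by nra.
      rewrite mulrS in h1.
      move: h1 h2 h3; rewrite /th /e2; lra.
    apply: le_trans (ler_sum _ hk) _.
    apply: (le_trans (y := \sum_(k < m) e * expR (- (eps ^+ 4 / 32 * m%:R)))).
      rewrite [X in _ <= X](bigID (fun k : 'I_m => (K <= k)%N)) /= lerDl.
      by apply: sumr_ge0 => k _; rewrite mulr_ge0 // ?expR_ge0; lra.
    rewrite sumr_const card_ord -(mulr_natl (e * _)) mulrCA.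
    have a0 : 0 < eps ^+ 4 / 32 by rewrite divr_gt0.
    apply: le_trans (ler_wpM2l _ (mexp m a0)) _; first lra.
    rewrite /M /X le_eqVlt; apply/orP; left; apply/eqP.
    have -> : - (eps ^+ 4 / 32 * m%:R / 2) = - (1 / 64 * eps ^+ 4 * m%:R) by field.
    by field; rewrite gt_eqF.
  rewrite /T; lra.
Qed.
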